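(* Fix a function $b:\mathbb{R}^d\to\mathbb{R}^+$, and for $u\in\mathbb{R}^d$ define $a_u:\mathbb{R}^d\to\mathbb{R}$ by $a_u(x)=b(u)\cdot(u\cdot x)$. The pseudo-dimension of $\{a_u: u\in B(1)\}$ is $O(d)$.
   Context: $B(1)=\{u\in\mathbb{R}^d:\|u\|_2\le1\}$. For a set $A$ of real-valued functions on a common domain $X$, its pseudo-dimension is the VC-dimension of the set of indicator functions $\{(x,y)\mapsto \mathbf{1}[a(x)\ge y]: a\in A\}$ on $X\times\mathbb{R}$. *)

(* Defs.v *)
From mathcomp Require Import all_boot all_order all_algebra.
From mathcomp Require Import reals.
Set Implicit Arguments. Unset Strict Implicit. Unset Printing Implicit Defensive.
Import Order.TTheory GRing.Theory Num.Theory.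
Local Open Scope ring_scope.

Definition dotv (R : realType) (d : nat) (u x : 'rV[R]_d) : R :=
  \sum_(i < d) u 0 i * x 0 i.

Definition unit_ball (R : realType) (d : nat) (u : 'rV[R]_d) : Prop :=
  dotv u u <= 1.

Definition shatters (T : eqType) (H : (T -> bool) -> Prop) (S : seq T) : Prop :=
  forall f : T -> bool, exists h, H h /\ forall x, x \in S -> h x = f x.

Definition VC_dim_le (T : eqType) (H : (T -> bool) -> Prop) (n : nat) : Prop :=
  forall S : seq T, uniq S -> shatters H S -> (size S <= n)%N.

Definition subgraph_class (R : realType) (X : eqType) (A : (X -> R) -> Prop)
  : (X * R -> bool) -> Prop :=
  fun g => exists a, A a /\ g = (fun p => p.2 <= a p.1).

Definition pdim_le (R : realType) (X : eqType) (A : (X -> R) -> Prop) (n : nat)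
  : Prop := VC_dim_le (subgraph_class A) n.

Definition a_fun (R : realType) (d : nat) (b : 'rV[R]_d -> R) (u : 'rV[R]_d)
  : 'rV[R]_d -> R := fun x => b u * dotv u x.

Definition a_class (R : realType) (d : nat) (b : 'rV[R]_d -> R)
  : ('rV[R]_d -> R) -> Prop :=
  fun a => exists u, unit_ball u /\ a = a_fun b u.

(* Main.v *)
Require Import Defs.
From mathcomp Require Import all_boot all_order all_algebra.
From mathcomp Require Import reals.
From mathcomp Require Import zify.
Import Order.TTheory GRing.Theory Num.Theory.
Local Open Scope ring_scope.

Lemma lin_dep (F : fieldType) m n (M : 'M[F]_(m,n)) : (n < m)%N ->
  exists c : 'rV_m, c != 0 /\ c *m M = 0.
Proof.
move=> lt_nm.
have : kermx M != 0.
  rewrite kermx_eq0 -row_leq_rank; apply/negP => h.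
  have := leq_trans h (rank_leq_col M).
  by rewrite leqNgt lt_nm.
move=> nz.
have [i Hi] : exists i, row i (kermx M) != 0.
  apply/existsP; apply: contraR nz; rewrite negb_exists => /forallP H.
  apply/eqP/row_matrixP => i; rewrite row0; exact/eqP/negPn/H.
exists (row i (kermx M)); split => //.
by rewrite -row_mul mulmx_ker row0.
Qed.

Lemma lin_dep_pos (R : realType) m n (M : 'M[R]_(m,n)) : (n < m)%N ->
  exists c : 'rV_m, (exists i, 0 < c 0 i) /\ c *m M = 0.
Proof.
move=> lt_nm; have [c [cnz cM]] := @lin_dep _ _ _ M lt_nm.
have [i Hi] : exists i, c 0 i != 0.
  apply/existsP; apply: contraR cnz; rewrite negb_exists => /forallP H.
  apply/eqP/rowP => i; rewrite mxE; exact/eqP/negPn/H.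
case: (ltrgtP (c 0 i) 0) => ci.
- exists (- c); split; first by exists i; rewrite mxE oppr_gt0.
  by rewrite mulNmx cM oppr0.
- by exists c; split => //; exists i.
- by move: Hi; rewrite ci eqxx.
Qed.

Lemma entry_eq (R : realType) d (x w : 'rV[R]_d) (y : R) :
  (row_mx x (- y)%:M *m col_mx w^T (1 : 'M_1)) 0 0 = dotv w x - y.
Proof.
rewrite mul_row_col mxE [X in _ + X]mxE big_ord1 !mxE /dotv eqxx mulr1n mulr1.
congr (_ - _); apply: eq_bigr => j _; rewrite !mxE mulrC //.
Qed.

Theorem lemma10 (R : realType) :
  exists C : nat, forall (d : nat), (0 < d)%N ->
    forall b : 'rV[R]_d -> R, (forall u, 0 < b u) ->
      pdim_le (a_class b) (C * d)%N.
Proof.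
exists 2%N => d d0 b bpos S uS shS.
suff : (size S <= d + 1)%N by move=> h; apply: (leq_trans h); lia.
rewrite leqNgt; apply/negP => lt.
set n := size S in lt.
have n0 : (0 < n)%N by lia.
pose i0 : 'I_n := Ordinal n0.
pose p0 : 'rV[R]_d * R := (0, 0).
pose M : 'M[R]_(n, d + 1) :=
  \matrix_(i < n) row_mx (nth p0 S i).1 (- (nth p0 S i).2)%:M.
have [c [[i ci] cM]] := @lin_dep_pos _ _ _ M lt.
pose f := fun p : 'rV[R]_d * R => ~~ (0 < c 0 (insubd i0 (index p S))).
have [h [[a [[u [_ au]] ->]] hf]] := shS f.
subst a.
pose w := b u *: u.
pose g := fun k : 'I_n => dotv w (nth p0 S k).1 - (nth p0 S k).2.
have hk : forall k : 'I_n,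
    ((nth p0 S k).2 <= a_fun b u (nth p0 S k).1) = ~~ (0 < c 0 k).
  move=> k; have := hf (nth p0 S k) (mem_nth p0 (ltn_ord k)).
  rewrite /f index_uniq // => ->; congr (~~ (0 < c 0 _)).
  by apply: val_inj; rewrite /= val_insubd (ltn_ord k).
have aw : forall x, a_fun b u x = dotv w x.
  move=> x; rewrite /a_fun /dotv mulr_sumr; apply: eq_bigr => j _.
  by rewrite !mxE mulrA.
have sum0 : \sum_k c 0 k * g k = 0.
  transitivity ((c *m (M *m col_mx w^T (1 : 'M_1))) 0 0); last first.
    by rewrite mulmxA cM mul0mx mxE.
  rewrite mxE; apply: eq_bigr => k _; congr (_ * _).
  have -> : (M *m col_mx w^T 1) k 0 = (row k M *m col_mx w^T 1) 0 0.
    by rewrite -row_mul [RHS]mxE.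
  by rewrite rowK entry_eq.
have term : forall k, c 0 k * g k <= 0.
  move=> k; have := hk k; rewrite aw /g.
  case: (ltrP 0 (c 0 k)) => ck /=.
  - move/negbT; rewrite -ltNge => lt'.
    by apply: ltW; rewrite pmulr_rlt0 // subr_lt0.
  - by move=> h1; apply: mulr_le0_ge0 => //; rewrite subr_ge0 h1.
have : c 0 i * g i < 0.
  have := hk i; rewrite aw /g ci /= => /negbT; rewrite -ltNge => lt'.
  by rewrite pmulr_rlt0 // subr_lt0.
move=> neg.
have : \sum_k c 0 k * g k < 0.
  rewrite (bigD1 i) //=.
  apply: (@le_lt_trans _ _ (c 0 i * g i)) => //.
  by rewrite gerDl; apply: sumr_le0 => k _; apply: term.
by rewrite sum0 ltxx.
Qed.
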